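(* Let $\beta_\bullet\in\{\beta,\beta_v\}$, let $\to_{\beta_\bullet}$ be the contextual closure of the rule $\beta_\bullet$ on $\Lambda_{\mathcal O}$, and let $\rightsquigarrow_U$ be the unbiased iteration of an associated surface reduction (as defined in the context). Then $\rightsquigarrow_U$ is a normalizing strategy for $\to_{\beta_\bullet}$.
   Context: Terms: $M::=x\mid\lambda x.M\mid MM\mid \mathsf{op}(M,\dots,M)$, $\mathsf{op}$ ranging over a (possibly empty) set $\mathcal O$ of operator symbols with fixed arities, up to renaming of bound variables; this set is $\Lambda_{\mathcal O}$. Values $V::=x\mid\lambda x.M$. Contexts $C::=[\,]\mid MC\mid CM\mid\lambda x.C\mid\mathsf{op}(M,\dots,C,\dots,M)$. Rules $(\lambda x.M)N\mapsto_\beta M\{N/x\}$; $(\lambda x.M)V\mapsto_{\beta_v}M\{V/x\}$ ($V$ a value); $\to_{\beta_\bullet}$ is the closure under all contexts. Head contexts $H::=[\,]\mid\lambda x.H\mid HM$; weak $W::=[\,]\mid WM\mid MW$; left $L::=[\,]\mid LM\mid VL$; right $R::=[\,]\mid MR\mid RV$. Surface reduction $\to_s$: for $\beta$, closure of $\beta$ under head contexts; for $\beta_v$, closure of $\beta_v$ under weak, or left, or right contexts (any one choice). $\rightsquigarrow_U$ is defined inductively: if $M\to_sM'$ then $M\rightsquigarrow_UM'$; if $M$ is $\to_s$-normal: $\lambda x.P\rightsquigarrow_U\lambda x.P'$ if $P\rightsquigarrow_UP'$; $PQ\rightsquigarrow_UP'Q$ if $P\rightsquigarrow_UP'$; $PQ\rightsquigarrow_UPQ'$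 if $Q\rightsquigarrow_UQ'$; $\mathsf{op}(\dots,P_i,\dots)\rightsquigarrow_U\mathsf{op}(\dots,P_i',\dots)$ if $P_i\rightsquigarrow_UP_i'$. A relation $\rightsquigarrow\subseteq\to$ is a normalizing strategy for $\to$ if it has the same normal forms as $\to$ and, whenever $t$ has a $\to$-normal form (i.e. $t\to^*u$ with $u$ $\to$-normal), every maximal $\rightsquigarrow$-sequence from $t$ (infinite, or finite ending in a $\rightsquigarrow$-normal form) ends in a $\to$-normal form. *)

(* Defs.v *)
(* Lambda terms with operators, up to alpha-equivalence,
   represented with de Bruijn indices. *)
From Stdlib Require Import Arith List Relations.
Import ListNotations.

Section Terms.
Variable O : Type.

Inductive term : Type :=
| Var : nat -> term
| Lam : term -> term
| App : term -> term -> term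
| Op  : O -> list term -> term.

Inductive wf (arity : O -> nat) : term -> Prop :=
| wf_var : forall n, wf arity (Var n)
| wf_lam : forall b, wf arity b -> wf arity (Lam b)
| wf_app : forall t u, wf arity t -> wf arity u -> wf arity (App t u)
| wf_op  : forall o args, length args = arity o ->
    (forall a, In a args -> wf arity a) -> wf arity (Op o args).

Fixpoint lift (k : nat) (t : term) : term :=
  match t with
  | Var n => if n <? k then Var n else Var (S n)
  | Lam b => Lam (lift (S k) b)
  | App t u => App (lift k t) (lift k u)
  | Op o args => Op o (map (lift k) args)
  end.

Fixpoint subst (k : nat) (N : term) (t : term) : term :=
  match t with
  | Var n => if n <? k then Var n else if n =? k then N else Var (pred n)
  | Lam b => Lam (subst (S k) (lift 0 N) b)
  | App t u => App (subst k N t) (subst k N u)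
  | Op o args => Op o (map (subst k N) args)
  end.

Definition is_value (t : term) : Prop :=
  match t with Var _ | Lam _ => True | _ => False end.

Inductive beta_rule : term -> term -> Prop :=
| beta_root : forall M N, beta_rule (App (Lam M) N) (subst 0 N M).

Inductive betav_rule : term -> term -> Prop :=
| betav_root : forall M V, is_value V -> betav_rule (App (Lam M) V) (subst 0 V M).

Inductive ctx_closure (r : term -> term -> Prop) : term -> term -> Prop :=
| cc_root : forall t u, r t u -> ctx_closure r t u
| cc_lam : forall t t', ctx_closure r t t' -> ctx_closure r (Lam t) (Lam t')
| cc_appl : forall t t' u, ctx_closure r t t' -> ctx_closure r (App t u) (App t' u)
| cc_appr : forall t u u', ctx_closure r u u' -> ctx_closure r (App t u) (App t u')
| cc_op : forall o l1 M M' l2, ctx_closure r M M' ->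
    ctx_closure r (Op o (l1 ++ M :: l2)) (Op o (l1 ++ M' :: l2)).

Inductive head_closure (r : term -> term -> Prop) : term -> term -> Prop :=
| hc_root : forall t u, r t u -> head_closure r t u
| hc_lam : forall t t', head_closure r t t' -> head_closure r (Lam t) (Lam t')
| hc_appl : forall t t' u, head_closure r t t' -> head_closure r (App t u) (App t' u).

Inductive weak_closure (r : term -> term -> Prop) : term -> term -> Prop :=
| wc_root : forall t u, r t u -> weak_closure r t u
| wc_appl : forall t t' u, weak_closure r t t' -> weak_closure r (App t u) (App t' u)
| wc_appr : forall t u u', weak_closure r u u' -> weak_closure r (App t u) (App t u').

Inductive left_closure (r : term -> term -> Prop) : term -> term -> Prop :=
| lc_root : forall t u, r t u -> left_closure r t u
| lc_appl : forall t t' u, left_closure r t t' -> left_closure r (App t u) (App t' u)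
| lc_appr : forall v u u', is_value v -> left_closure r u u' ->
    left_closure r (App v u) (App v u').

Inductive right_closure (r : term -> term -> Prop) : term -> term -> Prop :=
| rc_root : forall t u, r t u -> right_closure r t u
| rc_appr : forall t u u', right_closure r u u' -> right_closure r (App t u) (App t u')
| rc_appl : forall t t' v, is_value v -> right_closure r t t' ->
    right_closure r (App t v) (App t' v).

Inductive calculus : Type :=
| CBN
| CBV_weak
| CBV_left
| CBV_right.

Definition root_rule (c : calculus) : term -> term -> Prop :=
  match c with CBN => beta_rule | _ => betav_rule end.

Definition full_red (c : calculus) : term -> term -> Prop :=
  ctx_closure (root_rule c).

Definition surface_red (c : calculus) : term -> term -> Prop :=
  match c with
  | CBN => head_closure beta_rule
  | CBV_weak => weak_closure betav_rule
  | CBV_left => left_closure betav_rule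
  | CBV_right => right_closure betav_rule
  end.

Definition normal (r : term -> term -> Prop) (t : term) : Prop :=
  forall u, ~ r t u.

Inductive unbiased (c : calculus) : term -> term -> Prop :=
| u_surf : forall t u, surface_red c t u -> unbiased c t u
| u_lam : forall P P', normal (surface_red c) (Lam P) ->
    unbiased c P P' -> unbiased c (Lam P) (Lam P')
| u_appl : forall P P' Q, normal (surface_red c) (App P Q) ->
    unbiased c P P' -> unbiased c (App P Q) (App P' Q)
| u_appr : forall P Q Q', normal (surface_red c) (App P Q) ->
    unbiased c Q Q' -> unbiased c (App P Q) (App P Q')
| u_op : forall o l1 P P' l2, normal (surface_red c) (Op o (l1 ++ P :: l2)) ->
    unbiased c P P' -> unbiased c (Op o (l1 ++ P :: l2)) (Op o (l1 ++ P' :: l2)).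

(* S is a normalizing strategy for R on the set of terms [carrier]:
   S included in R; same normal forms; and from every term having an
   R-normal form, every maximal S-sequence (infinite, or finite ending in an
   S-normal form) ends in an R-normal form -- i.e. there is no infinite
   S-sequence and every finite one reaching an S-normal form ends in an
   R-normal form. *)
Definition normalizing_strategy (carrier : term -> Prop)
  (R Str : term -> term -> Prop) : Prop :=
  (forall t u, Str t u -> R t u) /\
  (forall t, carrier t -> (normal Str t <-> normal R t)) /\
  (forall t, carrier t ->
     (exists u, clos_refl_trans term R t u /\ normal R u) ->
     (~ exists f : nat -> term, f 0 = t /\ forall n, Str (f n) (f (S n))) /\
     (forall u, clos_refl_trans term Str t u -> normal Str u -> normal R u)).

End Terms.

Arguments Var {O}.
Arguments Lam {O}.
Arguments App {O}.
Arguments Op {O}.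

(* Main.v *)
Require Import Defs.
From Stdlib Require Import Arith List Relations Lia Classical_Prop.
Import ListNotations.

Section Dev.
Variable O : Type.
Local Notation tm := (term O).
Local Notation lft := (lift O).
Local Notation sbst := (subst O).

Fixpoint term_ind2 (P : tm -> Prop)
  (fv : forall n, P (Var n)) (fl : forall t, P t -> P (Lam t))
  (fa : forall t u, P t -> P u -> P (App t u))
  (fo : forall o l, Forall P l -> P (Op o l)) (t : tm) : P t :=
  match t with
  | Var n => fv n
  | Lam b => fl b (term_ind2 P fv fl fa fo b)
  | App a b => fa a b (term_ind2 P fv fl fa fo a) (term_ind2 P fv fl fa fo b)
  | Op o l => fo o l ((fix go (l : list tm) : Forall P l :=
       match l with [] => Forall_nil P | x :: l' => Forall_cons x (term_ind2 P fv fl fa fo x) (go l') end) l)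
  end.

Lemma map_ext_F {A B} (f g : A -> B) l : Forall (fun x => f x = g x) l -> map f l = map g l.
Proof. induction 1; simpl; f_equal; auto. Qed.

Ltac varcase := repeat (cbn [lift subst]; match goal with
  | |- context [?a <? ?b] => destruct (Nat.ltb_spec a b)
  | |- context [?a =? ?b] => destruct (Nat.eqb_spec a b)
  end); cbn [lift subst]; try (f_equal; lia); try lia; try reflexivity.

Ltac mapF := apply map_ext_F; eapply Forall_impl; [|eassumption]; simpl; intros; eauto.

Lemma lift_lift : forall t i k, i <= k -> lft i (lft k t) = lft (S k) (lft i t).
Proof.
  induction t using term_ind2; intros; cbn [lift subst].
  - varcase.
  - f_equal. apply IHt. lia.
  - f_equal; auto.
  - f_equal. rewrite !map_map. mapF.
Qed.

Lemma lift_subst_ge : forall t N j k, j <= k ->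
  lft k (sbst j N t) = sbst j (lft k N) (lft (S k) t).
Proof.
  induction t using term_ind2; intros; cbn [lift subst].
  - varcase.
  - f_equal. rewrite IHt by lia. f_equal. symmetry. apply lift_lift. lia.
  - f_equal; auto.
  - f_equal. rewrite !map_map. mapF.
Qed.

Lemma lift_subst_le : forall t N j k, k <= j ->
  lft k (sbst j N t) = sbst (S j) (lft k N) (lft k t).
Proof.
  induction t using term_ind2; intros; cbn [lift subst].
  - varcase.
  - f_equal. rewrite IHt by lia. f_equal. symmetry. apply lift_lift. lia.
  - f_equal; auto.
  - f_equal. rewrite !map_map. mapF.
Qed.

Lemma subst_lift_cancel : forall t P k, sbst k P (lft k t) = t.
Proof.
  induction t using term_ind2; intros; cbn [lift subst].
  - varcase.
  - f_equal. auto.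
  - f_equal; auto.
  - f_equal. rewrite map_map. rewrite <- (map_id l) at 2. mapF.
Qed.

Lemma subst_subst : forall B M N i j, i <= j ->
  sbst j N (sbst i M B) = sbst i (sbst j N M) (sbst (S j) (lft i N) B).
Proof.
  induction B using term_ind2; intros; cbn [lift subst].
  - varcase. rewrite subst_lift_cancel. auto.
  - f_equal. rewrite IHB by lia. f_equal.
    + symmetry. apply lift_subst_le. lia.
    + f_equal. symmetry. apply lift_lift. lia.
  - f_equal; auto.
  - f_equal. rewrite !map_map. mapF.
Qed.

Inductive star (R : tm -> tm -> Prop) : tm -> tm -> Prop :=
| s_refl x : star R x x
| s_step x y z : R x y -> star R y z -> star R x z.

Lemma star_trans R x y z : star R x y -> star R y z -> star R x z.
Proof. induction 1; intros; auto. eapply s_step; eauto. Qed.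

Lemma star_one (R : tm -> tm -> Prop) x y : R x y -> star R x y.
Proof. intros; eapply s_step; eauto using s_refl. Qed.

Lemma star_map (R R' : tm -> tm -> Prop) (f : tm -> tm) :
  (forall x y, R x y -> R' (f x) (f y)) -> forall x y, star R x y -> star R' (f x) (f y).
Proof. intros H x y; induction 1. apply s_refl. eapply s_step; eauto. Qed.


Definition beta_ok (c : calculus) (M : tm) : Prop := match c with CBN => True | _ => is_value O M end.

Local Notation root c := (root_rule O c).
Local Notation full c := (full_red O c).
Local Notation srf c := (surface_red O c).
Local Notation U c := (unbiased O c).

Lemma root_inv (c : calculus) t u : root c t u <-> exists B M, t = App (Lam B) M /\ beta_ok c M /\ u = sbst 0 M B.
Proof.
  unfold beta_ok; destruct c; simpl; split; intros H;
  try (destruct H; eauto 10; fail);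
  destruct H as (B & M & -> & HM & ->); constructor; auto.
Qed.

Lemma value_lift t k : is_value O (lft k t) <-> is_value O t.
Proof. destruct t; simpl; try tauto. destruct (n <? k); simpl; tauto. Qed.

Lemma value_subst t N k : is_value O N -> is_value O t -> is_value O (sbst k N t).
Proof. destruct t; simpl; try tauto. intros. destruct (n <? k); simpl; auto. destruct (n =? k); simpl; auto. Qed.

Lemma nvalue_subst t N k : ~ is_value O t -> ~ is_value O (sbst k N t).
Proof. destruct t; simpl; tauto. Qed.

Lemma ok_lift (c : calculus) M k : beta_ok c M -> beta_ok c (lft k M).
Proof. unfold beta_ok; destruct c; auto; apply value_lift. Qed.

Lemma ok_subst (c : calculus) M N k : beta_ok c N -> beta_ok c M -> beta_ok c (sbst k N M).
Proof. unfold beta_ok; destruct c; auto; apply value_subst. Qed.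

Lemma root_lift (c : calculus) t u k : root c t u -> root c (lft k t) (lft k u).
Proof.
  rewrite !root_inv. intros (B & M & -> & HM & ->). exists (lft (S k) B), (lft k M).
  split; [reflexivity|]. split. apply ok_lift; auto. apply lift_subst_ge. lia.
Qed.

Lemma root_subst (c : calculus) t u k N : beta_ok c N -> root c t u -> root c (sbst k N t) (sbst k N u).
Proof.
  intros HN. rewrite !root_inv. intros (B & M & -> & HM & ->).
  exists (sbst (S k) (lft 0 N) B), (sbst k N M).
  split; [reflexivity|]. split. apply ok_subst; auto. apply subst_subst. lia.
Qed.

Lemma ok_value (c : calculus) M : c <> CBN -> beta_ok c M -> is_value O M.
Proof. unfold beta_ok; destruct c; tauto. Qed.

Lemma value_ok (c : calculus) M : is_value O M -> beta_ok c M.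
Proof. unfold beta_ok; destruct c; tauto. Qed.


Ltac rootcase lem :=
  match goal with
  | H : beta_rule _ _ _ |- _ => constructor 1; apply (lem CBN); auto
  | H : betav_rule _ _ _ |- _ => constructor 1; apply (lem CBV_weak); auto
  end.

Lemma surf_lift (c : calculus) t u k : srf c t u -> srf c (lft k t) (lft k u).
Proof.
  revert k; destruct c; simpl; intros k H; revert k; induction H; intros k; simpl.
  all: try (rootcase root_lift; fail).
  all: try (constructor; auto; apply value_lift; auto; fail).
  all: try (constructor; auto; fail).
Qed.

Lemma surf_subst (c : calculus) t u k N : beta_ok c N -> srf c t u -> srf c (sbst k N t) (sbst k N u).
Proof.
  revert k N; destruct c; simpl; intros k N HN H; revert k N HN; induction H; intros k N HN; simpl.
  all: try (rootcase root_subst; fail).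
  all: try (constructor; auto; apply value_subst; auto; fail).
  all: try (constructor; auto; fail).
  all: try (constructor; apply IHhead_closure; apply ok_lift; auto).
Qed.

Inductive par (c : calculus) : tm -> tm -> Prop :=
| p_var n : par c (Var n) (Var n)
| p_lam t t' : par c t t' -> par c (Lam t) (Lam t')
| p_app t t' u u' : par c t t' -> par c u u' -> par c (App t u) (App t' u')
| p_op o l l' : parl c l l' -> par c (Op o l) (Op o l')
| p_beta t t' u u' : beta_ok c u -> par c t t' -> par c u u' -> par c (App (Lam t) u) (sbst 0 u' t')
with parl (c : calculus) : list tm -> list tm -> Prop :=
| pl_nil : parl c [] []
| pl_cons x x' l l' : par c x x' -> parl c l l' -> parl c (x :: l) (x' :: l').

Scheme par_min := Minimality for par Sort Prop
with parl_min := Minimality for parl Sort Prop.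
Combined Scheme par_comb from par_min, parl_min.

Inductive pint (c : calculus) : tm -> tm -> Prop :=
| pi_var n : pint c (Var n) (Var n)
| pi_lam_n t t' : c = CBN -> pint c t t' -> pint c (Lam t) (Lam t')
| pi_lam_v t t' : c <> CBN -> par c t t' -> pint c (Lam t) (Lam t')
| pi_app_n t t' u u' : c = CBN -> pint c t t' -> par c u u' -> pint c (App t u) (App t' u')
| pi_app_w t t' u u' : c = CBV_weak -> pint c t t' -> pint c u u' -> pint c (App t u) (App t' u')
| pi_app_lv t t' u u' : c = CBV_left -> is_value O t -> pint c t t' -> pint c u u' -> pint c (App t u) (App t' u')
| pi_app_ln t t' u u' : c = CBV_left -> ~ is_value O t -> pint c t t' -> par c u u' -> pint c (App t u) (App t' u')
| pi_app_rv t t' u u' : c = CBV_right -> is_value O u -> pint c t t' -> pint c u u' -> pint c (App t u) (App t' u')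
| pi_app_rn t t' u u' : c = CBV_right -> ~ is_value O u -> par c t t' -> pint c u u' -> pint c (App t u) (App t' u')
| pi_op o l l' : parl c l l' -> pint c (Op o l) (Op o l').

Lemma par_refl c t : par c t t.
Proof.
  induction t using term_ind2; constructor; auto.
  induction H; constructor; auto.
Qed.

Lemma parl_refl c l : parl c l l.
Proof. induction l; constructor; auto using par_refl. Qed.

Lemma parl_app c l1 l1' l2 l2' : parl c l1 l1' -> parl c l2 l2' -> parl c (l1 ++ l2) (l1' ++ l2').
Proof. induction 1; simpl; auto. constructor; auto. Qed.

Lemma step_par c t u : full c t u -> par c t u.
Proof.
  unfold full_red. induction 1.
  - apply root_inv in H as (B & M & -> & HM & ->). constructor; auto using par_refl.
  - constructor; auto.
  - constructor; auto using par_refl.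
  - constructor; auto using par_refl.
  - constructor. apply parl_app. apply parl_refl. constructor; auto. apply parl_refl.
Qed.

Lemma par_value c t u : par c t u -> is_value O t -> is_value O u.
Proof. destruct 1; simpl; tauto. Qed.

Lemma pint_value c t u : pint c t u -> (is_value O t <-> is_value O u).
Proof. destruct 1; simpl; tauto. Qed.

Lemma pint_par c t u : pint c t u -> par c t u.
Proof. induction 1; constructor; auto. Qed.

Lemma full_star_lam c t u : star (full c) t u -> star (full c) (Lam t) (Lam u).
Proof. apply star_map. intros; apply cc_lam; auto. Qed.
Lemma full_star_appl c t u a : star (full c) t u -> star (full c) (App t a) (App u a).
Proof. apply (star_map _ _ (fun x => App x a)). intros; apply cc_appl; auto. Qed.
Lemma full_star_appr c t u a : star (full c) t u -> star (full c) (App a t) (App a u).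
Proof. apply (star_map _ _ (fun x => App a x)). intros; apply cc_appr; auto. Qed.
Lemma full_star_op c o l1 l2 t u : star (full c) t u -> star (full c) (Op o (l1 ++ t :: l2)) (Op o (l1 ++ u :: l2)).
Proof. apply (star_map _ _ (fun x => Op o (l1 ++ x :: l2))). intros; apply cc_op; auto. Qed.

Lemma par_star c : (forall t u, par c t u -> star (full c) t u) /\
  (forall l l', parl c l l' -> forall o pre, star (full c) (Op o (pre ++ l)) (Op o (pre ++ l'))).
Proof.
  apply par_comb; intros.
  - apply s_refl.
  - apply full_star_lam; auto.
  - eapply star_trans. apply full_star_appl; eauto. apply full_star_appr; eauto.
  - specialize (H0 o []). auto.
  - eapply star_trans. apply full_star_appl. apply full_star_lam. eauto.
    eapply star_trans. apply full_star_appr. eauto.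
    apply star_one. apply cc_root. apply root_inv. do 2 eexists; split; [reflexivity|].
    split; [|reflexivity]. unfold beta_ok in *; destruct c; auto; eapply par_value; eauto.
  - apply s_refl.
  - eapply star_trans. apply full_star_op. eauto.
    specialize (H2 o (pre ++ [x'])). rewrite <- !app_assoc in H2. exact H2.
Qed.

Lemma par_lift_both c : (forall t u, par c t u -> forall k, par c (lft k t) (lft k u)) /\
  (forall l l', parl c l l' -> forall k, parl c (map (lft k) l) (map (lft k) l')).
Proof.
  apply par_comb; intros; simpl; try (constructor; auto; fail).
  - apply par_refl.
  - rewrite lift_subst_ge by lia. constructor; auto. apply ok_lift; auto.
Qed.

Lemma par_lift c t u k : par c t u -> par c (lft k t) (lft k u).
Proof. intros; apply par_lift_both; auto. Qed.

Lemma par_subst_both c : (forall t u, par c t u -> forall k N N', beta_ok c N -> par c N N' ->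
    par c (sbst k N t) (sbst k N' u)) /\
  (forall l l', parl c l l' -> forall k N N', beta_ok c N -> par c N N' ->
    parl c (map (sbst k N) l) (map (sbst k N') l')).
Proof.
  apply par_comb; intros; simpl; try (constructor; auto; fail).
  - varcase; try apply p_var; auto.
  - constructor. apply H0. apply ok_lift; auto. apply par_lift; auto.
  - rewrite subst_subst by lia. constructor; auto. apply ok_subst; auto.
    apply H1. apply ok_lift; auto. apply par_lift; auto.
Qed.

Lemma par_subst c t u k N N' : beta_ok c N -> par c N N' -> par c t u -> par c (sbst k N t) (sbst k N' u).
Proof. intros; apply par_subst_both; auto. Qed.

Lemma parl_lift c l l' k : parl c l l' -> parl c (map (lft k) l) (map (lft k) l').
Proof. intros; apply par_lift_both; auto. Qed.

Lemma parl_subst c l l' k N N' : beta_ok c N -> par c N N' -> parl c l l' -> parl c (map (sbst k N) l) (map (sbst k N') l').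
Proof. intros; apply par_subst_both; auto. Qed.

Lemma nvalue_lift t k : ~ is_value O t -> ~ is_value O (lft k t).
Proof. rewrite value_lift. auto. Qed.

Lemma pint_lift c t u k : pint c t u -> pint c (lft k t) (lft k u).
Proof.
  intros H; revert k; induction H; intros k; simpl.
  all: try (econstructor; eauto using par_lift, parl_lift, nvalue_lift; try apply value_lift; auto; fail).
  destruct (n <? k); constructor.
Qed.

Lemma value_par_pint c N N' : c <> CBN -> is_value O N -> par c N N' -> pint c N N'.
Proof.
  intros Hc HN H; destruct H; simpl in HN; try tauto.
  apply pi_var. apply pi_lam_v; auto.
Qed.

Lemma pint_subst c t u k N N' : c <> CBN -> is_value O N -> par c N N' -> pint c t u ->
  pint c (sbst k N t) (sbst k N' u).
Proof.
  intros Hc HN HNN H; revert k N N' HN HNN; induction H; intros k N N' HN HNN; simpl.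
  - varcase; try apply pi_var. apply value_par_pint; auto.
  - congruence.
  - apply pi_lam_v; auto. apply par_subst; auto. apply ok_lift, value_ok; auto. apply par_lift; auto.
  - congruence.
  - apply pi_app_w; auto.
  - apply pi_app_lv; auto. apply value_subst; auto.
  - apply pi_app_ln; auto. apply nvalue_subst; auto. apply par_subst; auto. apply value_ok; auto.
  - apply pi_app_rv; auto. apply value_subst; auto.
  - apply pi_app_rn; auto. apply nvalue_subst; auto. apply par_subst; auto. apply value_ok; auto.
  - constructor. apply parl_subst; auto. apply value_ok; auto.
Qed.

Lemma calculus_eq_dec (a b : calculus) : {a = b} + {a <> b}.
Proof. decide equality. Qed.

Lemma value_dec (t : tm) : {is_value O t} + {~ is_value O t}.
Proof. destruct t; simpl; auto. Qed.

Local Notation Ss c := (star (srf c)).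

Lemma srf_root c t u : root c t u -> srf c t u.
Proof. destruct c; simpl; intros; constructor; auto. Qed.

Lemma srf_lam c t u : c = CBN -> srf c t u -> srf c (Lam t) (Lam u).
Proof. intros ->; simpl; intros; apply hc_lam; auto. Qed.

Lemma srf_appl c t u a : (c = CBV_right -> is_value O a) -> srf c t u -> srf c (App t a) (App u a).
Proof. destruct c; simpl; intros. apply hc_appl; auto. apply wc_appl; auto. apply lc_appl; auto. apply rc_appl; auto. Qed.

Lemma srf_appr c t u a : c <> CBN -> (c = CBV_left -> is_value O a) -> srf c t u -> srf c (App a t) (App a u).
Proof. destruct c; simpl; intros; try congruence. apply wc_appr; auto. apply lc_appr; auto. apply rc_appr; auto. Qed.

Lemma Ss_lam c t u : c = CBN -> Ss c t u -> Ss c (Lam t) (Lam u).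
Proof. intros Hc; apply star_map; intros; apply srf_lam; auto. Qed.

Lemma Ss_appl c t u a : (c = CBV_right -> is_value O a) -> Ss c t u -> Ss c (App t a) (App u a).
Proof. intros Hc; apply (star_map _ _ (fun x => App x a)); intros; apply srf_appl; auto. Qed.

Lemma Ss_appr c t u a : c <> CBN -> (c = CBV_left -> is_value O a) -> Ss c t u -> Ss c (App a t) (App a u).
Proof. intros H1 H2; apply (star_map _ _ (fun x => App a x)); intros; apply srf_appr; auto. Qed.

Lemma Ss_lift c t u k : Ss c t u -> Ss c (lft k t) (lft k u).
Proof. apply star_map; intros; apply surf_lift; auto. Qed.

Lemma Ss_subst c t u k N : beta_ok c N -> Ss c t u -> Ss c (sbst k N t) (sbst k N u).
Proof. intro; apply star_map; intros; apply surf_subst; auto. Qed.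

Lemma lemL c m t' : pint c m t' -> c = CBN -> forall k u u', par c u u' ->
  (exists m2, Ss c u m2 /\ pint c m2 u') ->
  exists r, Ss c (sbst k u m) r /\ pint c r (sbst k u' t').
Proof.
  induction 1; intros Hc k a a' Ha (m2 & Hm2 & Hm2'); subst c; cbn [subst]; try discriminate; try congruence.
  - varcase; try (eexists; split; [apply s_refl| apply pi_var]).
    eauto.
  - destruct (IHpint eq_refl (S k) (lft 0 a) (lft 0 a')) as (r & Hr1 & Hr2).
    apply par_lift; auto. exists (lft 0 m2); split. apply Ss_lift; auto. apply pint_lift; auto.
    exists (Lam r); split. apply Ss_lam; auto. apply pi_lam_n; auto.
  - destruct (IHpint eq_refl k a a') as (r & Hr1 & Hr2); eauto.
    exists (App r (sbst k a u)); split. apply Ss_appl; auto. discriminate.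
    apply pi_app_n; auto. apply par_subst; simpl; auto.
  - eexists; split. apply s_refl. constructor. apply parl_subst; simpl; auto.
Qed.

Lemma split_lem c : (forall t u, par c t u -> exists m, Ss c t m /\ pint c m u) /\
   (forall l l', parl c l l' -> True).
Proof.
  apply par_comb; intros; auto.
  - eexists; split. apply s_refl. apply pi_var.
  - destruct (calculus_eq_dec c CBN) as [Hc|Hc].
    + destruct H0 as (m & H1 & H2). exists (Lam m). split. apply Ss_lam; auto. apply pi_lam_n; auto.
    + exists (Lam t). split. apply s_refl. apply pi_lam_v; auto.
  - destruct H0 as (m & Hm1 & Hm2). destruct H2 as (m2 & Hm3 & Hm4).
    destruct c eqn:Ec.
    + exists (App m u). split. apply Ss_appl; auto. discriminate. apply pi_app_n; auto.
    + exists (App m m2). split. eapply star_trans. apply Ss_appl; eauto. discriminate.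
      apply Ss_appr; auto; discriminate. apply pi_app_w; auto.
    + destruct (value_dec m).
      * exists (App m m2). split. eapply star_trans. apply Ss_appl; eauto. discriminate.
        apply Ss_appr; auto; discriminate. apply pi_app_lv; auto.
      * exists (App m u). split. apply Ss_appl; auto. discriminate. apply pi_app_ln; auto.
    + destruct (value_dec m2).
      * exists (App m m2). split. eapply star_trans. apply Ss_appr; eauto; discriminate.
        apply Ss_appl; auto. apply pi_app_rv; auto.
      * exists (App t m2). split. apply Ss_appr; auto; discriminate. apply pi_app_rn; auto.
  - eexists; split. apply s_refl. constructor; auto.
  - destruct H1 as (m & Hm1 & Hm2). 
    assert (Hr : srf c (App (Lam t) u) (sbst 0 u t)).
    { apply srf_root. apply root_inv. eauto. }
    destruct (calculus_eq_dec c CBN) as [Hc|Hc].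
    + destruct (lemL c m t' Hm2 Hc 0 u u' H2 H3) as (r & Hr1 & Hr2).
      exists r; split; auto. eapply s_step. exact Hr. eapply star_trans.
      apply Ss_subst; eauto. auto.
    + exists (sbst 0 u m). split. eapply s_step. exact Hr. apply Ss_subst; auto.
      apply pint_subst; auto. apply ok_value with c; auto.
Qed.

Lemma split_par c t u : par c t u -> exists m, Ss c t m /\ pint c m u.
Proof. apply split_lem. Qed.

Lemma srf_beta c B a : beta_ok c a -> srf c (App (Lam B) a) (sbst 0 a B).
Proof. intros; apply srf_root, root_inv; eauto 10. Qed.

Ltac pinv H := inversion H; subst; try congruence.

Ltac useIH := match goal with H: pint _ ?x ?y, IH: forall t, pint _ t ?y -> _ |- _ =>
   destruct (IH _ H) as (w & Hw1 & Hw2) end.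

Lemma merge_n u v : head_closure O (beta_rule O) u v -> forall t, pint CBN t u -> exists w, Ss CBN t w /\ par CBN w v.
Proof.
  induction 1; intros t0 Hp.
  - destruct H. pinv Hp. pinv H3.
    match goal with |- exists w, Ss _ (App (Lam ?B) ?a) w /\ _ => exists (sbst 0 a B) end.
    split. apply star_one. apply srf_beta. simpl; auto.
    apply par_subst; simpl; auto. apply pint_par; auto.
  - pinv Hp. useIH.
    eexists; split. apply Ss_lam; [reflexivity|exact Hw1]. constructor; auto.
  - pinv Hp. useIH.
    eexists; split. apply Ss_appl; [discriminate|exact Hw1]. constructor; auto.
Qed.

Lemma merge_w u v : weak_closure O (betav_rule O) u v -> forall t, pint CBV_weak t u -> exists w, Ss CBV_weak t w /\ par CBV_weak w v.
Proof.
  induction 1; intros t0 Hp.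
  - destruct H. pinv Hp. pinv H4.
    match goal with |- exists w, Ss _ (App (Lam ?B) ?a) w /\ _ => exists (sbst 0 a B) end.
    split. apply star_one. apply srf_beta. simpl. eapply pint_value; eauto.
    apply par_subst; simpl; try assumption; try (apply pint_par; assumption); eapply pint_value; eauto.
  - pinv Hp. useIH.
    eexists; split. apply Ss_appl; [discriminate|exact Hw1]. constructor; auto. apply pint_par; auto.
  - pinv Hp. useIH.
    eexists; split. apply Ss_appr; [discriminate|discriminate|exact Hw1]. constructor; auto. apply pint_par; auto.
Qed.

Ltac valcontra := match goal with
  | H : ~ is_value O ?x, H' : pint _ ?x ?y |- _ =>
     exfalso; apply H; apply (pint_value _ _ _ H'); simpl; auto; assumption
  end.

Lemma merge_l u v : left_closure O (betav_rule O) u v -> forall t, pint CBV_left t u -> exists w, Ss CBV_left t w /\ par CBV_left w v.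
Proof.
  induction 1; intros t0 Hp.
  - destruct H. pinv Hp; [|valcontra]. pinv H5.
    match goal with |- exists w, Ss _ (App (Lam ?B) ?a) w /\ _ => exists (sbst 0 a B) end.
    split. apply star_one. apply srf_beta. simpl. eapply pint_value; eauto.
    apply par_subst; simpl; try assumption; try (apply pint_par; assumption); eapply pint_value; eauto.
  - pinv Hp; useIH.
    all: eexists; split; [apply Ss_appl; [discriminate|exact Hw1] | constructor; auto; apply pint_par; auto].
  - pinv Hp; [|valcontra]. useIH.
    eexists; split. apply Ss_appr; [discriminate| intros; eapply pint_value; eauto |exact Hw1].
    constructor; auto; apply pint_par; auto.
Qed.

Lemma merge_r u v : right_closure O (betav_rule O) u v -> forall t, pint CBV_right t u -> exists w, Ss CBV_right t w /\ par CBV_right w v.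
Proof.
  induction 1; intros t0 Hp.
  - destruct H. pinv Hp; [|valcontra]. pinv H5.
    match goal with |- exists w, Ss _ (App (Lam ?B) ?a) w /\ _ => exists (sbst 0 a B) end.
    split. apply star_one. apply srf_beta. simpl. eapply pint_value; eauto.
    apply par_subst; simpl; try assumption; try (apply pint_par; assumption); eapply pint_value; eauto.
  - pinv Hp; useIH.
    all: eexists; split; [apply Ss_appr; [discriminate|discriminate|exact Hw1] | constructor; auto; apply pint_par; auto].
  - pinv Hp; [|valcontra]. useIH.
    eexists; split. apply Ss_appl; [intros; eapply pint_value; eauto |exact Hw1].
    constructor; auto; apply pint_par; auto.
Qed.

Lemma merge c t u v : pint c t u -> srf c u v -> exists w, Ss c t w /\ par c w v.
Proof.
  destruct c; simpl; intros.
  eapply merge_n; eauto. eapply merge_w; eauto. eapply merge_l; eauto. eapply merge_r; eauto.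
Qed.

Local Notation Is c := (star (pint c)).

Lemma sp c t u v : pint c t u -> srf c u v -> exists m, Ss c t m /\ pint c m v.
Proof.
  intros H1 H2. destruct (merge c t u v H1 H2) as (w & Hw1 & Hw2).
  destruct (split_par c w v Hw2) as (m & Hm1 & Hm2). exists m; split; auto. eapply star_trans; eauto.
Qed.

Lemma sp_star c u v : Ss c u v -> forall t, pint c t u -> exists m, Ss c t m /\ pint c m v.
Proof.
  induction 1; intros t Ht. exists t; split; auto; apply s_refl.
  destruct (sp c t x y Ht H) as (m1 & Hm1 & Hm2). destruct (IHstar _ Hm2) as (m & H1 & H2).
  exists m; split; auto. eapply star_trans; eauto.
Qed.

Lemma factor c t n : star (full c) t n -> exists m, Ss c t m /\ Is c m n.
Proof.
  induction 1. exists x; split; apply s_refl.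
  destruct IHstar as (m1 & Hm1 & Hm2).
  destruct (split_par c x y (step_par c x y H)) as (m0 & H1 & H2).
  destruct (sp_star c y m1 Hm1 m0 H2) as (m2 & H3 & H4).
  exists m2; split. eapply star_trans; eauto. eapply s_step; eauto.
Qed.

Lemma pint_value_fwd c t u : pint c t u -> is_value O t -> is_value O u.
Proof. intros H; apply (pint_value c t u H). Qed.

Lemma persist c t u : srf c t u -> forall t', pint c t t' -> exists u', srf c t' u'.
Proof.
  destruct c; simpl; induction 1; intros t0 Hp.
  all: try match goal with H : beta_rule _ _ _ |- _ => destruct H end.
  all: try match goal with H : betav_rule _ _ _ |- _ => destruct H end.
  all: pinv Hp.
  all: try valcontra.
  all: try match goal with H : pint _ (Lam _) _ |- _ => pinv H end.
  all: try (eexists; apply hc_root; constructor; fail).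
  all: try (eexists; apply wc_root; constructor; eauto using pint_value_fwd; fail).
  all: try (eexists; apply lc_root; constructor; eauto using pint_value_fwd; fail).
  all: try (eexists; apply rc_root; constructor; eauto using pint_value_fwd; fail).
  all: try (match goal with H: pint _ ?x ?y, IH: forall t, pint _ ?x t -> _ |- _ =>
     destruct (IH _ H) as (w & Hw) end; eexists; econstructor 2; eauto; fail).
  all: try (match goal with H: pint _ ?x ?y, IH: forall t, pint _ ?x t -> _ |- _ =>
     destruct (IH _ H) as (w & Hw) end; eexists; econstructor 3; eauto; fail).
  all: try (match goal with H: pint _ ?x ?y, IH: forall t, pint _ ?x t -> _ |- _ =>
     destruct (IH _ H) as (w & Hw) end; eexists; econstructor 3; eauto; eauto using pint_value_fwd; fail).
  all: exfalso; match goal with H : ~ is_value O (Lam _) |- _ => apply H; simpl; auto end.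
Qed.

Lemma srf_value c t u : c <> CBN -> is_value O t -> srf c t u -> False.
Proof.
  destruct c; simpl; intros Hc Hv H; try congruence; destruct t; simpl in Hv; try tauto;
  inversion H; subst; try match goal with H : betav_rule _ _ _ |- _ => inversion H end.
Qed.

Ltac noval c := exfalso; match goal with H : _ _ _ ?t _ |- _ => eapply (srf_value c t); [discriminate | simpl; auto; assumption | exact H] end.

Definition dia (R : tm -> tm -> Prop) a b := a = b \/ exists d, R a d /\ R b d.

Lemma dia_map (R : tm -> tm -> Prop) f a b : (forall x y, R x y -> R (f x) (f y)) ->
  dia R a b -> dia R (f a) (f b).
Proof. intros H [->|(d & H1 & H2)]. left; auto. right; exists (f d); auto. Qed.

Ltac diaL c := match goal with |- dia _ (App ?a ?u) (App ?b ?u) =>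
  apply (dia_map _ (fun x => App x u)); [intros; apply c; auto | auto] end.
Ltac diaR c := match goal with |- dia _ (App ?u ?a) (App ?u ?b) =>
  apply (dia_map _ (fun x => App u x)); [intros; apply c; auto | auto] end.

Lemma dia_n t a b : srf CBN t a -> srf CBN t b -> dia (srf CBN) a b.
Proof.
  simpl. intros H; revert b; induction H; intros b H2; inversion H2; subst.
  all: repeat match goal with H : beta_rule _ _ _ |- _ => inversion H; subst; clear H end.
  all: try (left; reflexivity).
  all: try match goal with H : head_closure _ _ (Lam _) _ |- _ => inversion H; subst; clear H end.
  all: repeat match goal with H : beta_rule _ _ _ |- _ => inversion H; subst; clear H end.
  all: try (right; eexists; split; [apply (surf_subst CBN); simpl; eauto | apply hc_root; constructor]; fail).
  all: try (right; eexists; split; [apply hc_root; constructor | apply (surf_subst CBN); simpl; eauto]; fail).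
  - apply (dia_map _ Lam). intros; apply hc_lam; auto. auto.
  - diaL hc_appl.
Qed.

Lemma dia_w t a b : srf CBV_weak t a -> srf CBV_weak t b -> dia (srf CBV_weak) a b.
Proof.
  simpl. intros H; revert b; induction H; intros b H2; inversion H2; subst.
  all: repeat match goal with H : betav_rule _ _ _ |- _ => inversion H; subst; clear H end.
  all: try (left; reflexivity).
  all: try noval CBV_weak.
  - diaL wc_appl.
  - right; eexists; split; [apply wc_appr | apply wc_appl]; eauto.
  - right; eexists; split; [apply wc_appl | apply wc_appr]; eauto.
  - diaR wc_appr.
Qed.

Lemma dia_l t a b : srf CBV_left t a -> srf CBV_left t b -> dia (srf CBV_left) a b.
Proof.
  simpl. intros H; revert b; induction H; intros b H2; inversion H2; subst.
  all: repeat match goal with H : betav_rule _ _ _ |- _ => inversion H; subst; clear H end.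
  all: try (left; reflexivity).
  all: try noval CBV_left.
  - diaL lc_appl.
  - diaR lc_appr.
Qed.

Lemma dia_r t a b : srf CBV_right t a -> srf CBV_right t b -> dia (srf CBV_right) a b.
Proof.
  simpl. intros H; revert b; induction H; intros b H2; inversion H2; subst.
  all: repeat match goal with H : betav_rule _ _ _ |- _ => inversion H; subst; clear H end.
  all: try (left; reflexivity).
  all: try noval CBV_right.
  - diaR rc_appr.
  - diaL rc_appl.
Qed.

Lemma diamond c t a b : srf c t a -> srf c t b -> dia (srf c) a b.
Proof. destruct c. apply dia_n. apply dia_w. apply dia_l. apply dia_r. Qed.

Local Notation nf R t := (normal O R t).

Lemma nf_appl c P Q : nf (srf c) (App P Q) -> (c = CBV_right -> is_value O Q) -> nf (srf c) P.
Proof. intros H Hv y Hy. apply (H (App y Q)). apply srf_appl; auto. Qed.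

Lemma nf_appr c P Q : nf (srf c) (App P Q) -> c <> CBN -> (c = CBV_left -> is_value O P) -> nf (srf c) Q.
Proof. intros H Hc Hv y Hy. apply (H (App P y)). apply srf_appr; auto. Qed.

Lemma nf_redex c B Q : nf (srf c) (App (Lam B) Q) -> beta_ok c Q -> False.
Proof. intros H Hv. apply (H _ (srf_beta c B Q Hv)). Qed.

Definition shape (t u : tm) : Prop :=
  match t, u with
  | Var _, Var _ | Lam _, Lam _ | App _ _, App _ _ | Op _ _, Op _ _ => True
  | _, _ => False end.

Lemma shape_U c P P' : nf (srf c) P -> U c P P' -> shape P P'.
Proof. intros H1 H2; destruct H2; simpl; auto. exfalso; eapply H1; eauto. Qed.

Lemma shape_value P P' : shape P P' -> is_value O P' -> is_value O P.
Proof. destruct P, P'; simpl; tauto. Qed.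

Lemma shape_lam P P' B : shape P P' -> P' = Lam B -> exists B', P = Lam B'.
Proof. intros H ->. destruct P; simpl in H; try tauto. eauto. Qed.

Lemma srf_op c o l y : srf c (Op o l) y -> False.
Proof. destruct c; simpl; intros H; inversion H; subst;
  match goal with H : _ _ _ _ |- _ => inversion H end. Qed.

Lemma srf_lam_inv c P y : srf c (Lam P) y -> c = CBN /\ exists P', y = Lam P' /\ srf c P P'.
Proof.
  destruct c; simpl; intros H; inversion H; subst;
  try match goal with H : beta_rule _ _ _ |- _ => inversion H end;
  try match goal with H : betav_rule _ _ _ |- _ => inversion H end; eauto.
Qed.

Lemma srf_app_inv c a b y : srf c (App a b) y ->
  (exists B, a = Lam B /\ beta_ok c b) \/ (exists a', srf c a a' /\ (c = CBV_right -> is_value O b)) \/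
  (exists b', srf c b b' /\ c <> CBN /\ (c = CBV_left -> is_value O a)).
Proof.
  destruct c; simpl; intros H; inversion H; subst;
  try match goal with H : beta_rule _ _ _ |- _ => inversion H; subst end;
  try match goal with H : betav_rule _ _ _ |- _ => inversion H; subst end;
  try (left; eexists; split; [reflexivity|simpl; auto]; fail);
  try (right; left; eexists; split; [eassumption|]; intros; auto; discriminate; fail);
  try (right; right; eexists; split; [eassumption|]; split; [discriminate|]; intros; auto; discriminate; fail).
Qed.

Lemma pres c t t' : U c t t' -> nf (srf c) t -> nf (srf c) t'.
Proof.
  induction 1; intros Hn.
  - exfalso; eapply Hn; eauto.
  - intros y Hy. apply srf_lam_inv in Hy as (Hc & P2 & -> & H2).
    assert (nf (srf c) P). { intros z Hz. apply (Hn (Lam z)). apply srf_lam; auto. }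
    eapply IHunbiased; eauto.
  - intros y Hy. apply srf_app_inv in Hy as [(B & -> & Hb) | [(a' & Ha & Hv) | (b' & Hb & Hc & Hv)]].
    + assert (HP : nf (srf c) P). { apply (nf_appl c P Q); auto. intros ->. apply (ok_value CBV_right); auto; discriminate. }
      destruct (shape_lam _ _ _ (shape_U c P _ HP H0) eq_refl) as (B' & ->).
      eapply nf_redex; eauto.
    + eapply IHunbiased; eauto. eapply nf_appl; eauto.
    + apply (nf_appr c P Q H Hc) in Hb; auto.
      intros Hl. apply (shape_value P P'); auto. apply (shape_U c); auto.
      apply (nf_appl c P Q); auto. congruence.
  - intros y Hy. apply srf_app_inv in Hy as [(B & -> & Hb) | [(a' & Ha & Hv) | (b' & Hb & Hc & Hv)]].
    + destruct (calculus_eq_dec c CBN) as [Hc|Hc].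
      * eapply nf_redex; eauto. subst c; simpl; auto.
      * assert (HQ : nf (srf c) Q). { apply (nf_appr c (Lam B) Q); simpl; auto. }
        eapply nf_redex; eauto. apply value_ok. apply (shape_value Q Q'). apply (shape_U c); auto.
        apply (ok_value c); auto.
    + apply (nf_appl c P Q H) in Ha; auto.
      intros Hr. apply (shape_value Q Q'); auto. apply (shape_U c); auto.
      apply (nf_appr c P Q); auto; congruence.
    + eapply IHunbiased; eauto. eapply nf_appr; eauto.
  - intros y Hy. eapply srf_op; eauto.
Qed.

Definition SNU c t := Acc (fun x y => U c y x) t.

Lemma U_lam_inv c P y : U c (Lam P) y -> exists P', y = Lam P' /\ U c P P'.
Proof.
  intros H; inversion H; subst; eauto.
  apply srf_lam_inv in H0 as (Hc & P' & -> & H1). exists P'; split; auto. apply u_surf; auto.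
Qed.

Lemma acc_lam c P : SNU c P -> SNU c (Lam P).
Proof.
  induction 1 as [P _ IH]. constructor. intros y Hy. apply U_lam_inv in Hy as (P' & -> & H). apply IH; auto.
Qed.

Lemma acc_app c P : SNU c P -> forall Q, SNU c Q -> nf (srf c) (App P Q) -> SNU c (App P Q).
Proof.
  induction 1 as [P HP IHP]. intros Q HQ. induction HQ as [Q HQ IHQ]. intros Hn.
  constructor. intros y Hy.
  assert (Hn' := pres c _ _ Hy Hn).
  inversion Hy; subst.
  - exfalso; eapply Hn; eauto.
  - apply IHP; auto. constructor; auto.
  - apply IHQ; auto.
Qed.

Definition LU c (l l' : list tm) := exists l1 P P' l2, l = l1 ++ P :: l2 /\ l' = l1 ++ P' :: l2 /\ U c P P'.

Lemma accl_cons c x : SNU c x -> forall l, Acc (fun a b => LU c b a) l -> Acc (fun a b => LU c b a) (x :: l).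
Proof.
  induction 1 as [x Hx IHx]. intros l Hl. induction Hl as [l Hl IHl].
  constructor. intros y (l1 & P & P' & l2 & E1 & -> & HU).
  destruct l1 as [|z l1]; simpl in *; inversion E1; subst.
  - apply IHx; auto. constructor; auto.
  - apply IHl. exists l1, P, P', l2; auto.
Qed.

Lemma accl c l : Forall (SNU c) l -> Acc (fun a b => LU c b a) l.
Proof.
  induction 1. constructor. intros y (l1 & P & P' & l2 & E1 & _ & _). destruct l1; discriminate.
  apply accl_cons; auto.
Qed.

Lemma acc_op c o l : Forall (SNU c) l -> SNU c (Op o l).
Proof.
  intros H. apply accl in H. induction H as [l _ IH].
  constructor. intros y Hy. inversion Hy; subst.
  - exfalso; eapply srf_op; eauto.
  - apply IH. do 4 eexists; eauto.
Qed.

Lemma srf_var c n y : srf c (Var n) y -> False.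
Proof. destruct c; simpl; intros H; inversion H; subst;
  match goal with H : _ _ _ _ |- _ => inversion H end. Qed.

Lemma acc_var c n : SNU c (Var n).
Proof. constructor. intros y Hy. inversion Hy; subst. exfalso; eapply srf_var; eauto. Qed.

Lemma par_star1 c t u : par c t u -> star (full c) t u.
Proof. apply par_star. Qed.

Lemma parl_F2 c l l' : parl c l l' -> Forall2 (star (full c)) l l'.
Proof. induction 1; constructor; auto using par_star1. Qed.

Lemma F2_trans c l1 l2 l3 : Forall2 (star (full c)) l1 l2 -> Forall2 (star (full c)) l2 l3 -> Forall2 (star (full c)) l1 l3.
Proof.
  intros H; revert l3; induction H; intros l3 H3; inversion H3; subst; constructor; eauto using star_trans.
Qed.

Lemma Is_lam c P x : Is c (Lam P) x -> exists P', x = Lam P' /\ star (full c) P P'.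
Proof.
  intros H; remember (Lam P) as t; revert P Heqt; induction H; intros P ->.
  - eauto using s_refl.
  - inversion H; subst; destruct (IHstar _ eq_refl) as (P9 & -> & H9);
    exists P9; split; auto; eapply star_trans; eauto; apply par_star1; auto; apply pint_par; auto.
Qed.

Lemma Is_app c P Q x : Is c (App P Q) x -> exists a b, x = App a b /\ star (full c) P a /\ star (full c) Q b.
Proof.
  intros H; remember (App P Q) as t; revert P Q Heqt; induction H; intros P Q ->.
  - eauto 6 using s_refl.
  - inversion H; subst; destruct (IHstar _ _ eq_refl) as (a9 & b9 & -> & H8 & H9);
    exists a9, b9; (split; [auto|]); split; eapply star_trans; eauto; apply par_star1; auto; apply pint_par; auto.
Qed.

Lemma Is_op c o l x : Is c (Op o l) x -> exists l', x = Op o l' /\ Forall2 (star (full c)) l l'.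
Proof.
  intros H; remember (Op o l) as t; revert l Heqt; induction H; intros l ->.
  - exists l; split; auto. induction l; constructor; auto using s_refl.
  - inversion H; subst; destruct (IHstar _ eq_refl) as (l9 & -> & H9).
    exists l9; split; auto. eapply F2_trans; eauto. apply parl_F2; auto.
Qed.

Lemma persist_star c m n : Is c m n -> forall u, srf c m u -> exists u', srf c n u'.
Proof.
  induction 1; intros u Hu; eauto. destruct (persist c _ _ Hu _ H) as (u' & Hu'). eauto.
Qed.

Lemma srf_full c t u : srf c t u -> full c t u.
Proof.
  destruct c; simpl; unfold full_red; induction 1.
  all: try (apply cc_root; simpl; auto; fail).
  all: try (apply cc_lam; auto; fail).
  all: try (apply cc_appl; auto; fail).
  all: try (apply cc_appr; auto; fail).
Qed.

Lemma U_full c t u : U c t u -> full c t u.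
Proof.
  induction 1. apply srf_full; auto. apply cc_lam; auto. apply cc_appl; auto. apply cc_appr; auto. apply cc_op; auto.
Qed.

Lemma U_nonnormal c t a y : srf c t a -> U c t y -> srf c t y.
Proof. intros H1 H2; inversion H2; subst; auto; exfalso; eapply H; eauto. Qed.

Inductive nstep (R : tm -> tm -> Prop) : nat -> tm -> tm -> Prop :=
| ns0 x : nstep R 0 x x
| nsS n x y z : R x y -> nstep R n y z -> nstep R (S n) x z.

Lemma star_nstep R x y : star R x y -> exists k, nstep R k x y.
Proof. induction 1. exists 0; constructor. destruct IHstar as (k & Hk). exists (S k); econstructor; eauto. Qed.

Lemma RD c k t m : nstep (srf c) k t m -> nf (srf c) m -> forall t', srf c t t' -> exists j, k = S j /\ nstep (srf c) j t' m.
Proof.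
  induction 1; intros Hm t' Ht'.
  - exfalso; eapply Hm; eauto.
  - destruct (diamond c x y t' H Ht') as [<- | (d & H1 & H2)].
    + eauto.
    + destruct (IHnstep Hm d H1) as (j & -> & Hj). exists (S j); split; auto. econstructor; eauto.
Qed.

Lemma acc_nstep c m : nf (srf c) m -> SNU c m -> forall k t, nstep (srf c) k t m -> SNU c t.
Proof.
  intros Hm HA k; induction k; intros t Ht; inversion Ht; subst; auto.
  constructor. intros y' Hy'. apply (U_nonnormal c t y) in Hy'; auto.
  destruct (RD c _ _ _ Ht Hm _ Hy') as (j & E & Hj). injection E as ->. apply IHk; auto.
Qed.

Fixpoint size (t : tm) : nat :=
  match t with
  | Var _ => 1
  | Lam b => S (size b)
  | App a b => S (size a + size b)
  | Op _ l => S (list_sum (map size l))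
  end.

Lemma size_pos t : 0 < size t.
Proof. destruct t; simpl; lia. Qed.

Lemma size_in x o l : In x l -> size x < size (Op o l).
Proof.
  simpl. induction l; simpl; intros H; [tauto|]. destruct H as [->|H]. lia. specialize (IHl H). lia.
Qed.

Lemma nf_lam c P : nf (full c) (Lam P) -> nf (full c) P.
Proof. intros H y Hy. apply (H (Lam y)). apply cc_lam; auto. Qed.

Lemma nf_appL c P Q : nf (full c) (App P Q) -> nf (full c) P.
Proof. intros H y Hy. apply (H (App y Q)). apply cc_appl; auto. Qed.

Lemma nf_appR c P Q : nf (full c) (App P Q) -> nf (full c) Q.
Proof. intros H y Hy. apply (H (App P y)). apply cc_appr; auto. Qed.

Lemma nf_op c o l x : nf (full c) (Op o l) -> In x l -> nf (full c) x.
Proof.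
  intros H Hin y Hy. apply in_split in Hin as (l1 & l2 & ->).
  apply (H (Op o (l1 ++ y :: l2))). apply cc_op; auto.
Qed.

Lemma F2_SNU c (P : tm -> Prop) l l' : Forall2 (star (full c)) l l' ->
  (forall x x', In x' l' -> star (full c) x x' -> SNU c x) -> Forall (SNU c) l.
Proof.
  induction 1; intros H'; constructor.
  - apply (H' x y); simpl; auto.
  - apply IHForall2. intros; eapply H'; simpl; eauto.
Qed.

Lemma main c k : forall n, size n <= k -> nf (full c) n -> forall t, star (full c) t n -> SNU c t.
Proof.
  induction k; intros n Hs Hn t Ht.
  - pose proof (size_pos n); lia.
  - destruct (factor c t n Ht) as (m & Hm1 & Hm2).
    assert (Hmn : nf (srf c) m).
    { intros u Hu. destruct (persist_star c m n Hm2 u Hu) as (u' & Hu'). eapply Hn. apply srf_full; eauto. }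
    destruct (star_nstep _ _ _ Hm1) as (j & Hj).
    apply (acc_nstep c m Hmn) with j; auto.
    destruct m as [v|P|P Q|o l].
    + apply acc_var.
    + destruct (Is_lam c P n Hm2) as (P' & -> & HP). apply acc_lam.
      apply (IHk P'); simpl in Hs; try lia; auto. eapply nf_lam; eauto.
    + destruct (Is_app c P Q n Hm2) as (a & b & -> & Ha & Hb). simpl in Hs. apply acc_app; auto.
      * apply (IHk a); try lia; auto. eapply nf_appL; eauto.
      * apply (IHk b); try lia; auto. eapply nf_appR; eauto.
    + destruct (Is_op c o l n Hm2) as (l' & -> & Hl). apply acc_op.
      apply (F2_SNU c (fun _ => True) l l' Hl). intros x x' Hin Hx.
      apply (IHk x'); auto. pose proof (size_in x' o l' Hin). lia. eapply nf_op; eauto.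
Qed.

Lemma full_U c t u : full c t u -> exists u', U c t u'.
Proof.
  unfold full_red; induction 1.
  - eexists; apply u_surf, srf_root; eauto.
  - destruct (Classical_Prop.classic (exists y, srf c (Lam t) y)) as [(y & Hy)|Hn].
    + exists y; apply u_surf; auto.
    + destruct IHctx_closure as (v & Hv). exists (Lam v). apply u_lam; auto.
      intros y Hy; apply Hn; eauto.
  - destruct (Classical_Prop.classic (exists y, srf c (App t u) y)) as [(y & Hy)|Hn].
    + exists y; apply u_surf; auto.
    + destruct IHctx_closure as (v & Hv). exists (App v u). apply u_appl; auto.
      intros y Hy; apply Hn; eauto.
  - destruct (Classical_Prop.classic (exists y, srf c (App t u) y)) as [(y & Hy)|Hn].
    + exists y; apply u_surf; auto.
    + destruct IHctx_closure as (v & Hv). exists (App t v). apply u_appr; auto.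
      intros y Hy; apply Hn; eauto.
  - destruct IHctx_closure as (v & Hv). exists (Op o (l1 ++ v :: l2)). apply u_op; auto.
    intros y Hy; eapply srf_op; eauto.
Qed.

Lemma rt_star (R : tm -> tm -> Prop) x y : clos_refl_trans tm R x y -> star R x y.
Proof. induction 1. apply star_one; auto. apply s_refl. eapply star_trans; eauto. Qed.

Lemma no_inf c t : SNU c t -> ~ exists f : nat -> tm, f 0 = t /\ forall n, U c (f n) (f (S n)).
Proof.
  intros HA (f & Hf0 & Hf).
  assert (forall x, SNU c x -> forall k, f k = x -> False).
  { induction 1 as [x _ IH]. intros k Hk. assert (HU : U c x (f (S k))) by (rewrite <- Hk; auto). apply (IH (f (S k)) HU (S k) eq_refl). }
  eapply H; eauto.
Qed.

Lemma final (arity : O -> nat) c : normalizing_strategy O (wf O arity) (full_red O c) (unbiased O c).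
Proof.
  assert (HnU : forall t, nf (U c) t -> nf (full c) t).
  { intros t H u Hu. destruct (full_U c t u Hu) as (u' & Hu'). apply (H u' Hu'). }
  split; [|split].
  - apply U_full.
  - intros t _; split; auto. intros H u Hu. apply (H u (U_full c t u Hu)).
  - intros t _ (u & Hr & Hn). split.
    + apply no_inf. apply (main c (size u) u (le_n _) Hn t (rt_star _ _ _ Hr)).
    + intros u0 _ Hu0. auto.
Qed.
End Dev.

Theorem mainTheorem5 (O : Type) (arity : O -> nat) (c : calculus) :
  normalizing_strategy O (wf O arity) (full_red O c) (unbiased O c).
Proof. exact (final O arity c). Qed.
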